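(* Let $\mathbb H=\mathbb R$ or $\mathbb C$, $\mathbf A\in\mathbb H^{m\times d}$, $\mathbf b\in\mathbb H^m$. Then neither $\mathbf M_{\mathbf A,\mathbf b}$ nor $\mathbf M^2_{\mathbf A,\mathbf b}$ is bi-Lipschitz on $\mathbb H^d$ (with respect to Euclidean norms).
   Context: For $\mathbf u,\mathbf v\in\mathbb H^d$, $\langle\mathbf u,\mathbf v\rangle=\sum_i\overline{u_i}v_i$. With $\mathbf A=(\mathbf a_1,\ldots,\mathbf a_m)^\top$ and $\mathbf b=(b_1,\ldots,b_m)^\top$, $\mathbf M_{\mathbf A,\mathbf b}(\mathbf x)=(|\langle\mathbf a_1,\mathbf x\rangle+b_1|,\ldots,|\langle\mathbf a_m,\mathbf x\rangle+b_m|)$ and $\mathbf M^2_{\mathbf A,\mathbf b}(\mathbf x)=(|\langle\mathbf a_1,\mathbf x\rangle+b_1|^2,\ldots,|\langle\mathbf a_m,\mathbf x\rangle+b_m|^2)$. A map $F$ is bi-Lipschitz on $\mathbb H^d$ if there are constants $0<c\le C$ with $c\|\mathbf x-\mathbf y\|\le\|F(\mathbf x)-F(\mathbf y)\|\le C\|\mathbf x-\mathbf y\|$ for all $\mathbf x,\mathbf y\in\mathbb H^d$. *)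

(* Defs.v *)
From mathcomp Require Import all_boot all_order all_algebra.
From mathcomp Require Import reals.
From mathcomp Require Export complex.
Set Implicit Arguments. Unset Strict Implicit. Unset Printing Implicit Defensive.
Import Order.TTheory GRing.Theory Num.Theory.
Local Open Scope ring_scope.

Section PhaseRetrievalDefs.
Variable R : realType.

Definition enorm (n : nat) (v : 'I_n -> R) : R := Num.sqrt (\sum_(i < n) v i ^+ 2).

(* H is R or C; absH is the modulus |.| : H -> R and conjH the conjugation. *)
Variables (H : comNzRingType) (absH : H -> R) (conjH : H -> H).

Definition Hnorm (d : nat) (x : 'I_d -> H) : R := enorm (fun i => absH (x i)).

Definition Hinner (d : nat) (u v : 'I_d -> H) : H := \sum_(i < d) conjH (u i) * v i.

Definition M_Ab (m d : nat) (A : 'M[H]_(m, d)) (b : 'I_m -> H) (x : 'I_d -> H)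
  : 'I_m -> R := fun k => absH (Hinner (fun j => A k j) x + b k).

Definition M2_Ab (m d : nat) (A : 'M[H]_(m, d)) (b : 'I_m -> H) (x : 'I_d -> H)
  : 'I_m -> R := fun k => absH (Hinner (fun j => A k j) x + b k) ^+ 2.

Definition bi_lipschitz (m d : nat) (F : ('I_d -> H) -> ('I_m -> R)) : Prop :=
  exists c C : R, 0 < c /\ c <= C /\
    forall x y : 'I_d -> H,
      c * Hnorm (fun i => x i - y i) <= enorm (fun k => F x k - F y k) /\
      enorm (fun k => F x k - F y k) <= C * Hnorm (fun i => x i - y i).

End PhaseRetrievalDefs.

Definition absR (R : realType) (x : R) : R := `|x|.
Definition conjR (R : realType) (x : R) : R := x.
Definition absC (R : realType) (z : R[i]) : R := Normc.normc z.
Definition conjC (R : realType) (z : R[i]) : R[i] := conjc z.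

(* Main.v *)
Require Import Defs.
From mathcomp Require Import all_boot all_order all_algebra.
From mathcomp Require Import reals complex.
From mathcomp Require Import lra.
Import Order.TTheory GRing.Theory Num.Theory.
Local Open Scope ring_scope.

Section Gen.
Variable R : realType.

Lemma enorm_ge0 n (v : 'I_n -> R) : 0 <= enorm v.
Proof. exact: sqrtr_ge0. Qed.

Lemma enorm_le n (u w : 'I_n -> R) : (forall k, `|u k| <= w k) -> enorm u <= enorm w.
Proof.
move=> h; rewrite /enorm ler_sqrt; last by apply: sumr_ge0 => i _; exact: sqr_ge0.
apply: ler_sum => i _; rewrite -real_normK ?num_real //.
by apply: lerXn2r; rewrite ?nnegrE ?normr_ge0 ?(le_trans (normr_ge0 _) (h i)).
Qed.

Lemma enorm_comp n (u : 'I_n -> R) k : `|u k| <= enorm u.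
Proof.
rewrite /enorm -sqrtr_sqr ler_sqrt; last by apply: sumr_ge0 => i _; exact: sqr_ge0.
by rewrite (bigD1 k) //= lerDl; apply: sumr_ge0 => i _; exact: sqr_ge0.
Qed.

Lemma enorm_supp1 n (v : 'I_n -> R) j : (forall i, i != j -> v i = 0) -> 0 <= v j -> enorm v = v j.
Proof.
move=> h hj; rewrite /enorm (bigD1 j) //= big1 ?addr0 ?sqrtr_sqr ?ger0_norm //.
by move=> i /h ->; rewrite expr0n.
Qed.

Lemma enorm0 n : enorm (fun _ : 'I_n => 0 : R) = 0.
Proof. by rewrite /enorm big1 ?sqrtr0 // => i _; rewrite expr0n. Qed.


Variables (H : comNzRingType) (absH : H -> R) (conjH : H -> H).
Hypothesis absH_ge0 : forall z, 0 <= absH z.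
Hypothesis absH_N : forall z, absH (- z) = absH z.
Hypothesis absH_D : forall z w, absH (z + w) <= absH z + absH w.
Hypothesis absH_M : forall z w, absH (z * w) = absH z * absH w.
Hypothesis absH_nat : forall n : nat, absH n%:R = n%:R.
Hypothesis absH_conj : forall z, absH (conjH z) = absH z.
Hypothesis absH_eq0 : forall z, absH z = 0 -> z = 0.

Lemma absH0 : absH 0 = 0.
Proof. by have := absH_nat 0; rewrite !mulr0n. Qed.

Lemma notbl_M m d (hd : (0 < d)%N) (A : 'M[H]_(m, d)) b :
  ~ @bi_lipschitz R H absH m d (M_Ab absH conjH A b).
Proof.
move=> [c [C [c0 [cC hb]]]].
pose j0 := Ordinal hd.
pose B := enorm (fun k => absH (b k) + absH (b k)).
have key : forall n : nat, c * (n.*2)%:R <= B.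
  move=> n; pose x := fun i : 'I_d => if i == j0 then (n%:R : H) else 0.
  have [h1 _] := hb x (fun i => - x i).
  have eqH : Hnorm absH (fun i => x i - - x i) = (n.*2)%:R.
    rewrite /Hnorm (@enorm_supp1 _ _ j0).
    - by rewrite /x eqxx opprK -natrD absH_nat addnn.
    - by move=> i /negbTE; rewrite /x => ->; rewrite oppr0 subr0 absH0.
    - exact: absH_ge0.
  rewrite -eqH; apply: le_trans h1 _; apply: enorm_le => k.
  rewrite /M_Ab /Hinner.
  set p := \sum_(i < d) conjH (A k i) * x i.
  have -> : \sum_(i < d) conjH (A k i) * - x i = - p.
    by rewrite -sumrN; apply: eq_bigr => i _; rewrite mulrN.
  have t1 : absH (p + b k) <= absH (- p + b k) + (absH (b k) + absH (b k)).
    have -> : p + b k = - (- p + b k) + (b k + b k) by rewrite opprD opprK addrA addrNK.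
    by apply: le_trans (absH_D _ _) _; rewrite absH_N lerD2l absH_D.
  have t2 : absH (- p + b k) <= absH (p + b k) + (absH (b k) + absH (b k)).
    have -> : - p + b k = - (p + b k) + (b k + b k) by rewrite opprD addrA addrNK.
    by apply: le_trans (absH_D _ _) _; rewrite absH_N lerD2l absH_D.
  rewrite ler_norml; apply/andP; split; lra.
have B0 : 0 <= B by exact: enorm_ge0.
pose n := Num.Def.archi_bound (B / c).
have hn := archi_boundP (divr_ge0 B0 (ltW c0)).
rewrite ltr_pdivrMr // in hn.
have := key n; rewrite -addnn natrD; fold n; lra.
Qed.

Lemma notbl_M2 m d (hd : (0 < d)%N) (A : 'M[H]_(m, d)) b :
  ~ @bi_lipschitz R H absH m d (M2_Ab absH conjH A b).
Proof.
move=> [c [C [c0 [cC hb]]]].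
case: (boolP [exists k, exists j, A k j != 0]).
  move=> /existsP [k /existsP [j hkj]].
  pose al := absH (A k j); pose be := absH (b k).
  have al0 : 0 < al.
    rewrite lt_def absH_ge0 andbT; apply/eqP => /absH_eq0 h; by rewrite h eqxx in hkj.
  have be0 : 0 <= be by exact: absH_ge0.
  pose K := (C + 2 * al * be) / (al ^+ 2).
  have K0 : 0 <= K by apply: divr_ge0; [nra | nra].
  pose n := Num.Def.archi_bound K.
  have hn := archi_boundP K0; fold n in hn.
  rewrite ltr_pdivrMr ?exprn_gt0 // in hn.
  pose N : R := n%:R.
  pose x := fun i : 'I_d => if i == j then (n%:R : H) else 0.
  have [_ h2] := hb x (fun _ => 0).
  have eqH : Hnorm absH (fun i => x i - 0) = N.
    rewrite /Hnorm (@enorm_supp1 _ _ j).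
    - by rewrite /x eqxx subr0 absH_nat.
    - by move=> i /negbTE; rewrite /x => ->; rewrite subr0 absH0.
    - exact: absH_ge0.
  rewrite eqH in h2.
  have hc := le_trans (enorm_comp _ _ k) h2.
  move: hc; rewrite /M2_Ab /Hinner.
  rewrite (bigD1 j) //= big1; last by move=> i /negbTE; rewrite /x => ->; rewrite mulr0.
  rewrite big1; last by move=> i _; rewrite mulr0.
  rewrite /x eqxx addr0 add0r.
  set q := conjH (A k j) * n%:R.
  have hq : absH q = al * N by rewrite /q absH_M absH_conj absH_nat.
  have hs : al * N - be <= absH (q + b k).
    have : absH q <= absH (q + b k) + absH (- b k).
      by apply: le_trans (absH_D _ _); rewrite addrK.
    rewrite hq absH_N -/be; lra.
  have s0 := absH_ge0 (q + b k).
  move: hs s0; rewrite -/be; set s := absH (q + b k) => hs s0 hc.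
  have N0 : 0 <= N by exact: ler0n.
  have h3 : 0 < al * N - be by nra.
  have h4 : (al * N - be) ^+ 2 <= s ^+ 2 by nra.
  have h5 : s ^+ 2 - be ^+ 2 <= C * N by move: hc; rewrite ler_norml => /andP [].
  nra.
rewrite negb_exists => /forallP hA.
have hA' : forall k j, A k j = 0.
  by move=> k j; move: (hA k); rewrite negb_exists => /forallP /(_ j); rewrite negbK => /eqP.
have hc0 : conjH 0 = 0 by apply: absH_eq0; rewrite absH_conj absH0.
pose j0 := Ordinal hd.
pose x := fun i : 'I_d => if i == j0 then (1 : H) else 0.
have [h1 _] := hb x (fun _ => 0).
have eqH : Hnorm absH (fun i => x i - 0) = 1.
  rewrite /Hnorm (@enorm_supp1 _ _ j0).
  - by rewrite /x eqxx subr0 (absH_nat 1).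
  - by move=> i /negbTE; rewrite /x => ->; rewrite subr0 absH0.
  - exact: absH_ge0.
rewrite eqH mulr1 in h1.
have : enorm (fun k => M2_Ab absH conjH A b x k - M2_Ab absH conjH A b (fun _ => 0) k) <= 0.
  rewrite -(enorm0 m); apply: enorm_le => k.
  rewrite /M2_Ab /Hinner !big1 ?subrr ?normr0 // => i _; by rewrite hA' hc0 mul0r.
lra.
Qed.

End Gen.
Lemma absC_nat (R : realType) n : @absC R (n%:R : R[i]) = n%:R.
Proof. rewrite /absC -[n%:R]/((1 : R[i]) *+ n). rewrite (@normcMn R 1 n). by rewrite Normc.normc1. Qed.
Lemma absC_conj (R : realType) z : @absC R (@conjC R z) = @absC R z.
Proof. by case: z => a b; rewrite /absC /conjC /= sqrrN. Qed.
Lemma absC_N (R : realType) z : @absC R (- z) = @absC R z.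
Proof. exact: normcN. Qed.
Lemma absC_D (R : realType) z w : @absC R (z + w) <= @absC R z + @absC R w.
Proof. exact: le_normcD. Qed.
Lemma absC_M (R : realType) z w : @absC R (z * w) = @absC R z * @absC R w.
Proof. exact: Normc.normcM. Qed.
Lemma absC_eq0 (R : realType) z : @absC R z = 0 -> z = 0.
Proof. exact: Normc.eq0_normc. Qed.
Lemma absC_ge0 (R : realType) z : 0 <= @absC R z.
Proof. by case: z => a b; rewrite /absC /= sqrtr_ge0. Qed.

Ltac realt := first [exact: normr_ge0 | exact: normrN | exact: ler_normD | exact: normrM
  | (by move=> ?; rewrite normr_nat) | by [] | by move=> ? /normr0_eq0 ].
Ltac cplxt := first [exact: absC_ge0 | exact: absC_N | exact: absC_D | exact: absC_M
  | exact: absC_nat | exact: absC_conj | exact: absC_eq0 ].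

Theorem proposition4p2 (R : realType) (m d : nat) (hd : (0 < d)%N) :
  (forall (A : 'M[R]_(m, d)) (b : 'I_m -> R),
      ~ @bi_lipschitz R R (@absR R) m d (@M_Ab R R (@absR R) (@conjR R) m d A b) /\
      ~ @bi_lipschitz R R (@absR R) m d (@M2_Ab R R (@absR R) (@conjR R) m d A b)) /\
  (forall (A : 'M[R[i]]_(m, d)) (b : 'I_m -> R[i]),
      ~ @bi_lipschitz R R[i] (@absC R) m d (@M_Ab R R[i] (@absC R) (@conjC R) m d A b) /\
      ~ @bi_lipschitz R R[i] (@absC R) m d (@M2_Ab R R[i] (@absC R) (@conjC R) m d A b)).
Proof.
split=> A b; split.
- apply: notbl_M => //; rewrite /absR /conjR; realt.
- apply: notbl_M2 => //; rewrite /absR /conjR; realt.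
- apply: notbl_M => //; cplxt.
- apply: notbl_M2 => //; cplxt.
Qed.
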